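(* Let $\mathfrak{G}$ be the CFSTR on species $A,B,C,D,E,F$ whose non-flow reactions are $D\rightleftarrows A+B+C$, $E\rightleftarrows A+B+C$, $F\rightleftarrows A+B$, together with the outflow reaction $X\to0$ for each of the six species (and possibly any inflow reactions). Then $\mathfrak{G}$ passes the Jacobian Criterion.
   Context: A reaction $y\to y'$ has complexes $y,y'\in\mathbb{Z}^s_{\ge0}$, $y\neq y'$; $u\rightleftarrows v$ denotes the two reactions $u\to v$ and $v\to u$; inflows $0\to X$ and outflows $X\to0$ are flow reactions. For a list of $s$ reactions $y_k\to y_k'$ on $s$ species: reactant matrix $M$ (row $k$ is $y_k$), reaction matrix $R$ (row $k$ is $y_k-y'_k$), orientation $\operatorname{sign}(\det M\det R)$. A CFSTR with $s$ species passes the Jacobian Criterion if every choice of $s$ distinct reactions containing no inflow reaction yields $s\times s$ reactant and reaction matrices (columns indexed by all species) with nonnegative orientation. *)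

(* Defs.v *)
From HB Require Import structures.
From mathcomp Require Import all_boot all_order all_algebra.
Set Implicit Arguments. Unset Strict Implicit. Unset Printing Implicit Defensive.
Import Order.TTheory GRing.Theory Num.Theory.
Local Open Scope ring_scope.

(* A complex on s species: a row vector in Z^s (entries meant to be >= 0). *)
Definition complex (s : nat) := 'rV[int]_s.
(* A reaction y -> y' is the pair (y, y'). *)
Definition reaction (s : nat) := (complex s * complex s)%type.

Definition spec {s : nat} (i : 'I_s) : complex s := \row_(j < s) (j == i)%:R.

Definition inflow {s : nat} (i : 'I_s) : reaction s := (0, spec i).
Definition outflow {s : nat} (i : 'I_s) : reaction s := (spec i, 0).

Definition is_inflow {s : nat} (r : reaction s) : bool :=
  (r.1 == 0) && [exists i : 'I_s, r.2 == spec i].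

Definition reactant_mx {s : nat} (f : 'I_s -> reaction s) : 'M[int]_s :=
  \matrix_(k < s, i < s) (f k).1 0 i.
Definition reaction_mx {s : nat} (f : 'I_s -> reaction s) : 'M[int]_s :=
  \matrix_(k < s, i < s) ((f k).1 0 i - (f k).2 0 i).

Definition orientation {s : nat} (f : 'I_s -> reaction s) : int :=
  sgz (\det (reactant_mx f) * \det (reaction_mx f)).

Definition passes_Jacobian_criterion {s : nat} (N : seq (reaction s)) : Prop :=
  forall f : 'I_s -> reaction s,
    injective f ->
    (forall k, f k \in N) ->
    (forall k, ~~ is_inflow (f k)) ->
    0 <= orientation f.

Definition sA : 'I_6 := inord 0.
Definition sB : 'I_6 := inord 1.
Definition sC : 'I_6 := inord 2.
Definition sD : 'I_6 := inord 3.
Definition sE : 'I_6 := inord 4.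
Definition sF : 'I_6 := inord 5.

Definition cABC : complex 6 := spec sA + spec sB + spec sC.
Definition cAB : complex 6 := spec sA + spec sB.

Definition network_G (ins : seq 'I_6) : seq (reaction 6) :=
  [:: (spec sD, cABC); (cABC, spec sD);
      (spec sE, cABC); (cABC, spec sE);
      (spec sF, cAB); (cAB, spec sF)]
  ++ [seq outflow i | i <- enum 'I_6]
  ++ [seq inflow i | i <- ins].

(* Main.v *)
Require Import Defs.
From mathcomp Require Import all_boot all_order all_algebra.
From mathcomp Require Import fingroup perm.
Set Implicit Arguments. Unset Strict Implicit. Unset Printing Implicit Defensive.
Import GRing.Theory Num.Theory.
Local Open Scope ring_scope.

Fixpoint cdet n (a : nat -> nat -> int) : int :=
  match n with 0 => 1 | n'.+1 =>
   foldr (fun j acc => if a 0%N j == 0 then acc else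
      (-1)^+j * a 0%N j * cdet n' (fun i j' => a i.+1 (bump j j')) + acc) 0 (iota 0 n) end.

Lemma sum_foldr (F : nat -> int) (s : seq nat) :
  \sum_(j <- s) F j = foldr (fun j acc => F j + acc) 0 s.
Proof. by elim: s => [|x s IH]; rewrite ?big_nil ?big_cons ?IH. Qed.

Lemma det_cdet n (a : nat -> nat -> int) :
  \det (\matrix_(i < n, j < n) a i j) = cdet n a.
Proof.
elim: n a => [|n IH] a; first by rewrite det_mx00.
rewrite (expand_det_row _ ord0).
transitivity (\sum_(j < n.+1) ((-1)^+j * a 0%N j * cdet n (fun i j' => a i.+1 (bump j j')))).
  apply: eq_bigr => j _; rewrite /cofactor !mxE add0n.
rewrite mulrA [a _ _ * _]mulrC.
  congr (_ * _ * _).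
  rewrite -IH; congr (\det _); apply/matrixP => i k; rewrite !mxE /=.
  by rewrite /bump /= add1n.
rewrite -[RHS]/(foldr (fun j acc => if a 0%N j == 0 then acc else (-1)^+j * a 0%N j * cdet n (fun i j' => a i.+1 (bump j j')) + acc) 0 (iota 0 n.+1)).
have -> : forall s, foldr (fun j acc => if a 0%N j == 0 then acc else (-1)^+j * a 0%N j * cdet n (fun i j' => a i.+1 (bump j j')) + acc) 0 s
   = foldr (fun j acc => (-1)^+j * a 0%N j * cdet n (fun i j' => a i.+1 (bump j j')) + acc) 0 s.
  elim=> [|x s IHs] //=; rewrite IHs; case: eqP => // ->; by rewrite mulr0 mul0r add0r.
rewrite -sum_foldr.
have -> : iota 0 n.+1 = index_iota 0 n.+1 by rewrite /index_iota subn0.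
by rewrite big_mkord.
Qed.
Definition tabM : seq (seq int) :=
  [:: [:: 0;0;0;1;0;0]; [:: 1;1;1;0;0;0]; [:: 0;0;0;0;1;0]; [:: 1;1;1;0;0;0];
      [:: 0;0;0;0;0;1]; [:: 1;1;0;0;0;0];
      [:: 1;0;0;0;0;0]; [:: 0;1;0;0;0;0]; [:: 0;0;1;0;0;0]; [:: 0;0;0;1;0;0];
      [:: 0;0;0;0;1;0]; [:: 0;0;0;0;0;1]].
Definition tabR : seq (seq int) :=
  [:: [:: -1;-1;-1;1;0;0]; [:: 1;1;1;-1;0;0]; [:: -1;-1;-1;0;1;0]; [:: 1;1;1;0;-1;0];
      [:: -1;-1;0;0;0;1]; [:: 1;1;0;0;0;-1];
      [:: 1;0;0;0;0;0]; [:: 0;1;0;0;0;0]; [:: 0;0;1;0;0;0]; [:: 0;0;0;1;0;0];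
      [:: 0;0;0;0;1;0]; [:: 0;0;0;0;0;1]].
Definition rM (r i : nat) : int := nth 0 (nth [::] tabM r) i.
Definition rR (r i : nat) : int := nth 0 (nth [::] tabR r) i.

Fixpoint allbits n : seq bitseq :=
  if n is n'.+1 then [seq b :: m | b <- [:: true; false], m <- allbits n'] else [:: [::]].

Lemma allbitsP n (m : bitseq) : size m = n -> m \in allbits n.
Proof.
elim: n m => [|n IH] [|b m] //= [Hm].
rewrite mem_cat cats0.
have inj : forall c : bool, injective (cons c) by move=> c x y [].
by case: b; rewrite (mem_map (inj _)) IH ?orbT.
Qed.

Definition chk (s : seq nat) : bool :=
  0 <= sgz (cdet 6 (fun k i => rM (nth 0%N s k) i) * cdet 6 (fun k i => rR (nth 0%N s k) i)).

Definition allchk : bool :=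
  all (fun m => (size (mask m (iota 0 12)) != 6%N) || chk (mask m (iota 0 12))) (allbits 12).

Lemma allchk_ok : allchk = true.
Proof. vm_compute. reflexivity. Qed.
Definition L12 : seq (reaction 6) :=
  [:: (spec sD, cABC); (cABC, spec sD);
      (spec sE, cABC); (cABC, spec sE);
      (spec sF, cAB); (cAB, spec sF)]
  ++ [seq outflow i | i <- enum 'I_6].

Lemma enum6 : enum 'I_6 = [:: sA; sB; sC; sD; sE; sF].
Proof. by apply: (inj_map val_inj); rewrite val_enum_ord /= !inordK. Qed.

Lemma sAE : sA = Ordinal (isT : (0 < 6)%N). Proof. by apply: val_inj; rewrite /= inordK. Qed.
Lemma sBE : sB = Ordinal (isT : (1 < 6)%N). Proof. by apply: val_inj; rewrite /= inordK. Qed.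
Lemma sCE : sC = Ordinal (isT : (2 < 6)%N). Proof. by apply: val_inj; rewrite /= inordK. Qed.
Lemma sDE : sD = Ordinal (isT : (3 < 6)%N). Proof. by apply: val_inj; rewrite /= inordK. Qed.
Lemma sEE : sE = Ordinal (isT : (4 < 6)%N). Proof. by apply: val_inj; rewrite /= inordK. Qed.
Lemma sFE : sF = Ordinal (isT : (5 < 6)%N). Proof. by apply: val_inj; rewrite /= inordK. Qed.

Lemma L12_entries r (i : 'I_6) : (r < 12)%N ->
  (nth (0,0) L12 r).1 0 i = rM r i /\
  (nth (0,0) L12 r).1 0 i - (nth (0,0) L12 r).2 0 i = rR r i.
Proof.
rewrite /L12 enum6 => Hr.
case: r Hr => [|[|[|[|[|[|[|[|[|[|[|[|r]]]]]]]]]]]] Hr //.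
all: case: i => [[|[|[|[|[|[|i]]]]]] Hi] //.
all: rewrite /= /cABC /cAB /spec /outflow !mxE ?sAE ?sBE ?sCE ?sDE ?sEE ?sFE.
all: split; vm_compute; reflexivity.
Qed.

Lemma orient_perm (f F : 'I_6 -> reaction 6) (s : 'S_6) :
  (forall k, f k = F (s k)) -> orientation f = orientation F.
Proof.
move=> Ef.
have EM : reactant_mx f = row_perm s (reactant_mx F).
  by apply/matrixP => k i; rewrite !mxE Ef.
have ER : reaction_mx f = row_perm s (reaction_mx F).
  by apply/matrixP => k i; rewrite !mxE Ef.
rewrite /orientation EM ER !row_permE !det_mulmx det_perm.
by case: (perm.odd_perm s); rewrite ?expr1 ?expr0 ?mul1r // !mulN1r mulrNN.
Qed.

Theorem mainTheorem11 (ins : seq 'I_6) :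
  passes_Jacobian_criterion (network_G ins).
Proof.
move=> f finj fin fni.
have inL : forall k, f k \in L12.
  move=> k; have := fin k; rewrite /network_G catA mem_cat => /orP [] // /mapP [i _ Ef].
  move: (fni k); rewrite Ef /is_inflow /= eqxx /=.
  by case/negP; apply/existsP; exists i.
have sL : size L12 = 12%N by rewrite /L12 size_cat size_map size_enum_ord.
have hg : forall k, (index (f k) L12 < 12)%N by move=> k; rewrite -sL index_mem.
pose g k : 'I_12 := Ordinal (hg k).
have Ef : forall k, f k = nth (0,0) L12 (g k) by move=> k; rewrite nth_index.
have ginj : injective g.
  by move=> a b Hab; apply: finj; rewrite !Ef Hab.
pose S := [set g k | k in 'I_6].
have cS : #|S| = 6%N by rewrite card_imset // card_ord.
pose es := enum S.
have ses : size es = 6%N by rewrite -cardE.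
have gin : forall k, g k \in es by move=> k; rewrite mem_enum; apply: imset_f.
have hs : forall k, (index (g k) es < 6)%N by move=> k; rewrite -[X in (_ < X)%N]ses index_mem.
pose s0 k : 'I_6 := Ordinal (hs k).
have Es0 : forall k, nth ord0 es (s0 k) = g k by move=> k; rewrite nth_index.
have s0inj : injective s0.
  by move=> a b Hab; apply: ginj; rewrite -!Es0 Hab.
pose F k := nth (0,0) L12 (nth ord0 es k).
rewrite (@orient_perm f F (perm s0inj)); last by move=> k; rewrite permE /F Es0 Ef.
pose sq := map val es.
have ssq : size sq = 6%N by rewrite size_map.
have nsq : forall k : 'I_6, nth 0%N sq k = nth ord0 es k.
  by move=> k; rewrite (nth_map ord0) // ses.
have EM : reactant_mx F = \matrix_(k < 6, i < 6) rM (nth 0%N sq k) i.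
  apply/matrixP => k i; rewrite !mxE nsq /F.
  by case: (L12_entries i (ltn_ord (nth ord0 es k))).
have ER : reaction_mx F = \matrix_(k < 6, i < 6) rR (nth 0%N sq k) i.
  apply/matrixP => k i; rewrite !mxE nsq /F.
  by case: (L12_entries i (ltn_ord (nth ord0 es k))).
pose m := map (fun x => x \in S) (enum 'I_12).
have Esq : sq = mask m (iota 0 12).
  rewrite /sq /es /m {1}/enum_mem -enumT filter_mask map_mask val_enum_ord //.


have sm : size m = 12%N by rewrite size_map size_enum_ord.
have := allchk_ok; rewrite /allchk => /allP /(_ m (allbitsP sm)).
rewrite -Esq ssq /= /chk /orientation EM ER (det_cdet 6 (fun k i => rM (nth 0%N sq k) i)) (det_cdet 6 (fun k i => rR (nth 0%N sq k) i)).
done.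
Qed.
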